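(* For each positive integer $n$ let $K_n=\{\alpha_{0n},\alpha_{1n},\dots,\alpha_{nn}\}\subset[0,1]$ with $\alpha_{0n}\le\alpha_{1n}\le\cdots\le\alpha_{nn}$, and suppose $$\lim_{n\to\infty}\max_{p\in[0,1]}\sum_{k=0}^n\binom{n}{k}p^k(1-p)^{n-k}|p-\alpha_{kn}|=0.$$ Then the normalized counting measures $\delta_{K_n}=\frac{1}{n+1}\sum_{j=0}^n\delta_{\alpha_{jn}}$ converge weak$^*$ to Lebesgue measure $dx$ on $[0,1]$ as $n\to\infty$, i.e. $\lim_{n\to\infty}\int_0^1 g\,d\delta_{K_n}=\int_0^1 g(x)\,dx$ for every $g\in C[0,1]$.
   Context: $\delta_x$ denotes the unit point mass (Dirac measure) at $x$. *)

(* Defs.v *)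
From HB Require Import structures.
From mathcomp Require Import all_boot all_order all_algebra.
From mathcomp Require Import all_classical all_reals all_analysis.
Set Implicit Arguments. Unset Strict Implicit. Unset Printing Implicit Defensive.
Import Order.TTheory GRing.Theory Num.Theory numFieldNormedType.Exports.
Local Open Scope classical_set_scope.
Local Open Scope ring_scope.

(* alpha n k = alpha_{kn}, for k = 0..n *)

Definition bern_dev (R : realType) (alpha : nat -> nat -> R) (n : nat) (p : R) : R :=
  \sum_(k < n.+1) ('C(n, k))%:R * p ^+ k * (1 - p) ^+ (n - k) * `|p - alpha n k|.

(* max_{p in [0,1]} of bern_dev (the max exists by continuity; written as sup) *)
Definition max_bern_dev (R : realType) (alpha : nat -> nat -> R) (n : nat) : R :=
  sup [set bern_dev alpha n p | p in `[(0:R), 1]%classic].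

Definition int_deltaK (R : realType) (alpha : nat -> nat -> R) (g : R -> R) (n : nat) : R :=
  (n.+1%:R)^-1 * \sum_(j < n.+1) g (alpha n j).

(* Main.v *)
Require Import Defs.
From HB Require Import structures.
From mathcomp Require Import all_boot all_order all_algebra.
From mathcomp Require Import all_classical all_reals all_analysis.
From mathcomp Require Import lra.
Import Order.TTheory GRing.Theory Num.Theory numFieldNormedType.Exports.
Local Open Scope classical_set_scope.
Local Open Scope ring_scope.

Section Aux.
Variable R : realType.
Local Notation mu := (@lebesgue_measure R).
Local Notation D := (`[(0:R), 1]%classic).

Lemma mD : @measurable _ (measurableTypeR R) D.
Proof. exact: measurable_itv. Qed.

Lemma int_cont (f : R -> R) : {within D, continuous f} -> mu.-integrable D (EFin \o f).
Proof. by move=> fc; apply: continuous_compact_integrable => //; exact: segment_compact. Qed.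

Lemma int_cst (c : R) : mu.-integrable D (EFin \o (fun=> c)).
Proof. by apply: int_cont; apply: continuous_subspaceT => x; exact: cst_continuous. Qed.

Lemma Rint_sum (I : Type) (s : seq I) (f : I -> R -> R) :
  (forall i, mu.-integrable D (EFin \o f i)) ->
  mu.-integrable D (EFin \o (fun x => \sum_(i <- s) f i x)) /\
  Rintegral mu D (fun x => \sum_(i <- s) f i x) = \sum_(i <- s) Rintegral mu D (f i).
Proof.
move=> fi; elim: s => [|i s [ihi ihe]].
  have -> : (fun x => \sum_(i <- [::]) f i x) = (fun=> 0) by apply/funext=> x; rewrite big_nil.
  split; first exact: int_cst.
  by rewrite Rintegral_cst ?mul0r ?big_nil //; exact: mD.
have -> : (fun x => \sum_(j <- i :: s) f j x) = (fun x => f i x + \sum_(j <- s) f j x).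
  by apply/funext=> x; rewrite big_cons.
split.
  have -> : EFin \o (fun x => f i x + \sum_(j <- s) f j x) = 
    (EFin \o f i) \+ (EFin \o (fun x => \sum_(j <- s) f j x)) by apply/funext.
  by apply: integrableD => //; exact: mD.
by rewrite RintegralD ?ihe ?big_cons //; exact: mD.
Qed.

Lemma Rint_bern (n k : nat) : (k <= n)%N ->
  Rintegral mu D (fun p => ('C(n, k))%:R * p ^+ k * (1 - p) ^+ (n - k)) = (n.+1%:R)^-1.
Proof.
move=> kn.
transitivity (Rintegral mu D (fun p => 'C(n, k)%:R * XMonemX k (n - k) p)).
  by apply: eq_Rintegral => p _; rewrite /XMonemX mulrA.
rewrite RintegralZl; [|exact: mD|exact: integrable_XMonemX].
have := @beta_fun_fact R k (n - k).
rewrite /beta_fun -Rintegral_mkcond /= => ->.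
rewrite subnKC // factS.
rewrite mulrA -natrM bin_fact // natrM invfM mulrCA divff ?mulr1 //.

Qed.




Lemma pw_cont (g : R -> R) : {within D, continuous g} -> forall x, D x ->
  forall e, 0 < e -> exists2 d, 0 < d & forall y, D y -> `|x - y| < d -> `|g x - g y| < e.
Proof.
move=> gc x Dx e e0.
have := (@subspace_continuousP _ D _ g).1 gc x Dx.
move/cvgrPdist_lt => /(_ e e0).
rewrite /within nearE /=.
move=> /nbhs_ballP [d d0 H].
exists d => // y Dy xy; apply: H => //.
Qed.

Lemma unif_cont (g : R -> R) : {within D, continuous g} ->
  forall e, 0 < e -> exists2 d, 0 < d &
    forall x y, D x -> D y -> `|x - y| < d -> `|g x - g y| < e.
Proof.
move=> gc e e0.
have [//|nH] := pselect (exists2 d, 0 < d &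
    forall x y, D x -> D y -> `|x - y| < d -> `|g x - g y| < e).
have : forall n : nat, exists xy : R * R, [/\ D xy.1, D xy.2,
    `|xy.1 - xy.2| < n.+1%:R^-1 & e <= `|g xy.1 - g xy.2|].
  move=> n; apply: contrapT => nex; apply: nH; exists n.+1%:R^-1 => // x y Dx Dy xy.
  rewrite ltNge; apply/negP => exy; apply: nex; exists (x, y); split => //.
move=> /choice [u Hu].
have bu : bounded_fun (fun n => (u n).1).
  exists 1; split; first exact: num_real.
  move=> M M1 n _; have [/= + _ _ _] := Hu n.
  rewrite in_itv /= => /andP [h0 h1].
  by rewrite ger0_norm // (le_trans h1) // ltW.
have [phi phiinc] := bolzano_weierstrass bu.
move=> /cvg_ex [l Hl].
have phige : forall n, (n <= phi n)%N.
  move/increasing_seqP : phiinc => pinc.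
  elim=> [//|n ih]; exact: leq_ltn_trans ih (pinc n).
have Dl : D l.
  apply: (closed_cvg _ _ _ _ Hl); first exact: interval_closed.
  by apply: nearW => n /=; have [] := Hu (phi n).
have [d d0 Hd] := @pw_cont g gc l Dl (e / 2) (divr_gt0 e0 (ltr0Sn _ _)).
have d2 : 0 < d / 2 by rewrite divr_gt0.
move/cvgrPdist_lt : Hl => /(_ _ d2) H1.
have H2 := near_infty_natSinv_lt (PosNum d2).
have [n [/= h1 h2]] := filter_ex (filterI H1 H2).
have [Dx Dy xy exy] := Hu (phi n).
have xy2 : `|(u (phi n)).1 - (u (phi n)).2| < d / 2.
  apply: (lt_le_trans xy); apply: (le_trans _ (ltW h2)).
  by rewrite lef_pV2 ?posrE ?ltr0Sn // ler_nat ltnS.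
have ly : `|l - (u (phi n)).2| < d.
  rewrite -(subrK (u (phi n)).1 l) -addrA (le_lt_trans (ler_normD _ _)) //.
  by rewrite (splitr d) ltrD.
have d2d : d / 2 < d by rewrite ltr_pdivrMr // ltr_pMr // ltr1n.
have := Hd _ Dx (lt_trans h1 d2d); have := Hd _ Dy ly => hy hx.
exfalso; move: exy; rewrite leNgt => /negP; apply.
rewrite -(subrK (g l) (g _)) -addrA (le_lt_trans (ler_normD _ _)) //.
by rewrite (splitr e) ltrD // distrC.
Qed.




Lemma cont_b (C c : R) a b : continuous (fun p : R => C * p ^+ a * (1 - p) ^+ b * c).
Proof.
move=> p.
have -> : (fun p : R => C * p ^+ a * (1 - p) ^+ b * c) = (fun p => (C * XMonemX a b p) * c).
  by apply/funext => q; rewrite /XMonemX mulrA.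
apply: cvgMl; apply: cvgMr; exact: continuous_XMonemX.
Qed.

Lemma bern_sum (n : nat) (p : R) :
  \sum_(k < n.+1) ('C(n, k))%:R * p ^+ k * (1 - p) ^+ (n - k) = 1.
Proof.
transitivity ((1 - p + p) ^+ n); last by rewrite subrK expr1n.
rewrite exprDn.
by apply: eq_bigr => i _; rewrite -mulrA (mulrC (p ^+ i)) mulr_natl.
Qed.

Lemma bk_ge0 (n k : nat) (p : R) : D p -> 0 <= ('C(n, k))%:R * p ^+ k * (1 - p) ^+ (n - k).
Proof.
rewrite /= in_itv /= => /andP [p0 p1].
by rewrite !mulr_ge0 // ?exprn_ge0 // subr_ge0.
Qed.

End Aux.

Theorem theorem3p4 (R : realType) (alpha : nat -> nat -> R)
  (Hin : forall n k, (0 < n)%N -> (k <= n)%N -> 0 <= alpha n k <= 1)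
  (Hmono : forall n k, (0 < n)%N -> (k < n)%N -> alpha n k <= alpha n k.+1)
  (Hlim : max_bern_dev alpha n @[n --> \oo] --> 0) :
  forall g : R -> R, {within `[(0:R), 1]%classic, continuous g} ->
    int_deltaK alpha g n @[n --> \oo] --> Rintegral lebesgue_measure `[(0:R), 1]%classic g.
Proof.
move=> g gc.
have mD := @mD R.
have [M [M0 HM]] : exists M : R, 0 < M /\ forall x, `[(0:R), 1]%classic x -> `|g x| <= M.
  have /compact_bounded[M [_ mrt]] := continuous_compact gc (@segment_compact _ (0:R) 1).
  exists (`|M| + 1); split; first by rewrite ltr_wpDl.
  move=> x Dx; apply: (mrt (`|M| + 1)); last by exists x.
  by rewrite (le_lt_trans (ler_norm M)) // ltrDl.
apply/cvgrPdist_le => e e0.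
have e2 : 0 < e / 2 by rewrite divr_gt0.
have [d d0 Hd] := @unif_cont R g gc _ e2.
set C := 2 * M / d.
have C0 : 0 < C by rewrite /C !mulr_gt0 // invr_gt0.
have LIP : forall a p, `[(0:R), 1]%classic a -> `[(0:R), 1]%classic p ->
    `|g a - g p| <= e / 2 + C * `|p - a|.
  move=> a p Da Dp.
  have [ap|ap] := ltP `|a - p| d.
    by rewrite (le_trans (ltW (Hd _ _ Da Dp ap))) // lerDl mulr_ge0 // ltW.
  apply: (le_trans (ler_normB _ _)); apply: (le_trans (lerD (HM _ Da) (HM _ Dp))).
  rewrite -[M + M]add0r; apply: lerD; first exact: ltW.
  rewrite -mulr2n -mulr_natl /C -mulrA; apply: ler_peMr; first by rewrite mulr_ge0 // ltW.
  by rewrite mulrC ler_pdivlMr // mul1r distrC.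
set eta := e / 2 / C.
have eta0 : 0 < eta by rewrite divr_gt0.
move/cvgrPdist_le : Hlim => /(_ _ eta0) Hl.
near=> n.
have n0 : (0 < n)%N by near: n; exists 1%N.
have hmd : `|0 - max_bern_dev alpha n| <= eta by near: n; exact: Hl.
have mdeta : max_bern_dev alpha n <= eta.
  by rewrite sub0r normrN in hmd; exact: le_trans (ler_norm _) hmd.
have Dalpha : forall k : 'I_n.+1, `[(0:R), 1]%classic (alpha n k).
  by move=> k; rewrite /= in_itv /=; apply: Hin => //; rewrite -ltnS ltn_ord.
pose bk (k : nat) (p : R) := 'C(n, k)%:R * p ^+ k * (1 - p) ^+ (n - k).
have ibkc : forall (k : nat) (c : R),
    (@lebesgue_measure R).-integrable `[(0:R), 1]%classic (EFin \o (fun p => bk k p * c)).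
  move=> k c; apply: int_cont; apply: continuous_subspaceT => p; exact: cont_b.
have ibk : forall k : nat,
    (@lebesgue_measure R).-integrable `[(0:R), 1]%classic (EFin \o bk k).
  move=> k; have -> : bk k = (fun p => bk k p * 1) by apply/funext => p; rewrite mulr1.
  exact: ibkc.
pose F p := \sum_(k < n.+1) bk k p * g (alpha n k).
have [iF eF] := @Rint_sum R 'I_n.+1 (index_enum _)
  (fun k p => bk k p * g (alpha n k)) (fun k => ibkc k _).
have ig := @int_cont R g gc.
have E1 : int_deltaK alpha g n = Rintegral lebesgue_measure `[(0:R), 1]%classic F.
  rewrite /F eF /int_deltaK big_distrr /=; apply: eq_bigr => k _.
  rewrite (RintegralZr _ mD (ibk k)).
  rewrite Rint_bern; first by rewrite mulrC.
  by rewrite -ltnS ltn_ord.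
have iFg : (@lebesgue_measure R).-integrable `[(0:R), 1]%classic (EFin \o (fun p => F p - g p)).
  have -> : EFin \o (fun p => F p - g p) = ((EFin \o F) \- (EFin \o g))%E.
    by apply/funext => p; rewrite /= EFinB.
  exact: integrableB.
rewrite E1 distrC -RintegralB //.
apply: le_trans (le_normr_Rintegral mD iFg) _.
set c := e / 2 + C * max_bern_dev alpha n.
have ptw : forall p, `[(0:R), 1]%classic p -> `|F p - g p| <= c.
  move=> p Dp.
  have -> : g p = \sum_(k < n.+1) bk k p * g p by rewrite -big_distrl /= bern_sum mul1r.
  rewrite /F -sumrB.
  apply: le_trans (ler_norm_sum _ _ _) _.
  apply: (@le_trans _ _ (\sum_(k < n.+1) bk k p * (e / 2 + C * `|p - alpha n k|))).
    apply: ler_sum => k _; rewrite -mulrBr normrM ger0_norm; last exact: bk_ge0.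
    by apply: ler_wpM2l; [exact: bk_ge0 | exact: LIP].
  under eq_bigr do rewrite mulrDr.
  rewrite big_split /= -big_distrl /= bern_sum mul1r /c lerD2l.
  under eq_bigr do rewrite mulrCA.
  rewrite -big_distrr /=.
  apply: ler_wpM2l; first exact: ltW.
  apply: ub_le_sup; last by exists p.
  exists 1 => _ [q Dq <-].
  rewrite /bern_dev; apply: (@le_trans _ _ (\sum_(k < n.+1) bk k q)); last by rewrite /bk bern_sum.
  apply: ler_sum => k _.
  rewrite -[X in _ <= X]mulr1; apply: ler_wpM2l; first exact: bk_ge0.
  move: Dq (Dalpha k); rewrite /= !in_itv /= => /andP[q0 q1] /andP[a0 a1].
  rewrite ler_norml; apply/andP; split; lra.
apply: le_trans (le_Rintegral mD (integrable_norm iFg) (@int_cst R c) ptw) _.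
rewrite Rintegral_cst //.
have H1 := @lebesgue_measure_itv R `[0, 1]%R.
rewrite /= lte01 /= in H1.
rewrite [fine _](_ : _ = 1); last by apply: (etrans (congr1 fine H1)); rewrite /= oppr0 addr0.
rewrite mulr1 /c [X in _ <= X](splitr e) lerD2l.
apply: le_trans (ler_wpM2l (ltW C0) mdeta) _.
by rewrite /eta mulrC divfK // gt_eqF.
Unshelve. all: by end_near.
Qed.
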